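(* Let $G$ be a connected (finite, simple) graph, let $\mathcal{F}$ be a maximum induced forest of $G$ having the fewest connected components among all maximum induced forests of $G$, let $H$ be the contracted graph and let $B$ be a skeleton of $H$ whose configuration vector is lexicographically highest among all skeletons of $H$, with inner skeleton $B_1$ (all as defined in the context). Let $v$ be a non-tree vertex of degree exactly $2$ in $B_1$ whose two neighbors in $B_1$ are a tree vertex $x_T$ and a vertex $x'$, where the tree $T$ consists of a single edge $u_1u_2$. If $v$ has no 2-edge in $H$ to any tree vertex other than $x_T$, then $v$ has no edge in $H$ to any tree vertex other than $x_T$.
   Context: A maximum induced forest of $G$ is an induced forest with the maximum number of vertices. Let $\mathcal{T}$ be the set of connected components (trees) of $\mathcal{F}$ and $S=V(G)\setminus V(\mathcal{F})$. The graph $H$ has vertex set $\{x_T : T\in\mathcal{T}\}\cup S$ (the $x_T$ are tree vertices, the vertices of $S$ non-tree vertices) and edge set consisting of all edges of $G[S]$ together with all pairs $ux_T$ with $u\in S$, $T\in\mathcal{T}$ such that $u$ has at least one neighbor in $V(T)$ in $G$. An edge $ux_T$ of $H$ is a 2-edge if $u$ has at least two neighbors in $V(T)$ in $G$; all other edges of $H$ are 1-edges. A skeleton is a spanning tree of $H$ rooted at some tree vertex, with all edges directed towards the root. For a skeleton $B$ with root $r$, the level $\ell_B(v)$ of a vertex $v$ is the number of vertices on the path from $v$ to $r$ in $B$, and the configuration vector of $B$ is $\langle |E_2(B)|, \sum_{v:\ell_B(v)=1}\deg_B(v), \ldots,\sum_{v:\ell_B(v)=|V(H)|}\deg_B(v)\rangle$,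 where $E_2(B)$ is the set of 2-edges of $B$ and $\deg_B(v)$ the total degree of $v$ in $B$. Let $L_S$ be the set of vertices of $S$ that are leaves of $B$; the inner skeleton is $B_1=B[V(B)\setminus L_S]$. *)

(* Defs.v *)
(* Finite simple graph: T : finType, e : rel T symmetric, irreflexive. *)
From mathcomp Require Import all_boot.
Set Implicit Arguments. Unset Strict Implicit. Unset Printing Implicit Defensive.

Section Defs.
Variables (T : finType) (e : rel T).

Definition induced_forest (F : {set T}) : Prop :=
  ~ exists c : seq T, [/\ 3 <= size c, uniq c, all (fun x => x \in F) c & cycle e c].

Definition eF (F : {set T}) : rel T := [rel x y | [&& x \in F, y \in F & e x y]].

Definition trees (F : {set T}) : {set {set T}} :=
  [set [set y in F | connect (eF F) x y] | x in F].

Definition maximum_induced_forest (F : {set T}) : Prop :=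
  induced_forest F /\ forall F', induced_forest F' -> #|F'| <= #|F|.

Definition min_comp_max_forest (F : {set T}) : Prop :=
  maximum_induced_forest F /\
  forall F', maximum_induced_forest F' -> #|trees F| <= #|trees F'|.

(* vertices of H: inl u for a non-tree vertex u in S, inr C for the tree vertex x_T, C = V(T) *)
Definition Hv : finType := (T + {set T})%type.

Definition Hvert (F : {set T}) (z : Hv) : bool :=
  match z with inl u => u \notin F | inr C => C \in trees F end.

Definition Hadj (z w : Hv) : bool :=
  match z, w with
  | inl u, inl u' => e u u'
  | inl u, inr C => [exists y in C, e u y]
  | inr C, inl u => [exists y in C, e u y]
  | inr _, inr _ => false
  end.

Definition Hedge (F : {set T}) (z w : Hv) : bool := [&& Hvert F z, Hvert F w & Hadj z w].

Definition two_edge (u : T) (C : {set T}) : bool := 2 <= #|[set y in C | e u y]|.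

(* skeleton: spanning tree b (symmetric edge relation) of H, rooted at the tree vertex r *)
Definition skeleton (F : {set T}) (b : rel Hv) (r : Hv) : Prop :=
  [/\ (forall z w, b z w = b w z),
      (forall z w, b z w -> Hedge F z w),
      (match r with inr C => C \in trees F | inl _ => false end),
      (forall z w, Hvert F z -> Hvert F w -> connect b z w)
    & ~ exists c : seq Hv, [/\ 3 <= size c, uniq c & cycle b c]].

(* level: number of vertices on the (unique) path from z to r in b *)
Definition level (b : rel Hv) (r z : Hv) : nat :=
  (find (fun k => [exists t : k.-tuple Hv,
            [&& path b z t, last z t == r & uniq (z :: t)]])
        (iota 0 #|Hv|)).+1.

Definition degB (b : rel Hv) (z : Hv) : nat := #|[set w | b z w]|.

(* number of 2-edges of b (each edge u x_T counted once) *)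
Definition n2edges (b : rel Hv) : nat :=
  #|[set p : T * {set T} | b (inl p.1) (inr p.2) && two_edge p.1 p.2]|.

Definition nH (F : {set T}) : nat := #|[set z | Hvert F z]|.

Definition config (F : {set T}) (b : rel Hv) (r : Hv) : seq nat :=
  n2edges b :: [seq \sum_(z | Hvert F z && (level b r z == j)) degB b z
                | j <- iota 1 (nH F)].

Fixpoint lexle (s t : seq nat) : bool :=
  match s, t with
  | [::], _ => true
  | _ :: _, [::] => false
  | x :: s', y :: t' => (x < y) || ((x == y) && lexle s' t')
  end.

Definition best_skeleton (F : {set T}) (b : rel Hv) (r : Hv) : Prop :=
  skeleton F b r /\
  forall b' r', skeleton F b' r' -> lexle (config F b' r') (config F b r).

Definition leafS (F : {set T}) (b : rel Hv) (z : Hv) : bool :=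
  match z with inl u => (u \notin F) && (degB b z == 1) | inr _ => false end.

Definition inner_vert (F : {set T}) (b : rel Hv) (z : Hv) : bool :=
  Hvert F z && ~~ leafS F b z.
Definition inner_edge (F : {set T}) (b : rel Hv) : rel Hv :=
  [rel z w | [&& b z w, inner_vert F b z & inner_vert F b w]].

End Defs.

(* Main.v *)
Require Import Defs.
From mathcomp Require Import all_boot fingraph.
Set Implicit Arguments. Unset Strict Implicit. Unset Printing Implicit Defensive.

Definition compF (T : finType) (e : rel T) (F : {set T}) (x : T) : {set T} :=
  [set y in F | connect (eF e F) x y].

Lemma eF_sym (T : finType) (e : rel T) (F : {set T}) : symmetric e -> symmetric (eF e F).
Proof. by move=> es x y; rewrite /eF /= es andbCA. Qed.

Lemma comp_eq (T : finType) (e : rel T) (F : {set T}) x y : symmetric e ->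
  y \in compF e F x -> compF e F y = compF e F x.
Proof.
move=> es; rewrite inE => /andP[yF cxy]; have cs := sym_connect_sym (eF_sym F es).
apply/setP=> z; rewrite !inE; case: (z \in F) => //=.
apply/idP/idP => H; first exact: connect_trans cxy H.
by apply: connect_trans H; rewrite cs.
Qed.

Lemma mem_comp (T : finType) (e : rel T) (F : {set T}) x : x \in F -> x \in compF e F x.
Proof. by move=> xF; rewrite inE xF connect0. Qed.

Lemma trees_mem (T : finType) (e : rel T) (F : {set T}) K y : symmetric e ->
  K \in trees e F -> y \in K -> K = compF e F y.
Proof. by move=> es /imsetP[x _ ->] yK; rewrite (comp_eq es yK). Qed.

Lemma trees_sub (T : finType) (e : rel T) (F : {set T}) K y :
  K \in trees e F -> y \in K -> y \in F.
Proof. by move=> /imsetP[x _ ->]; rewrite inE => /andP[]. Qed.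

Lemma card_lt_fact (A R : finType) (X : {set A}) (f g : A -> R) :
  {in X &, forall x y, f x = f y -> g x = g y} ->
  forall x y, x \in X -> y \in X -> f x != f y -> g x = g y ->
  #|g @: X| < #|f @: X|.
Proof.
move=> fg x y xX yX fxy gxy.
pose k Y := g (odflt x [pick z in X | f z == Y]).
have kf : {in X, forall z, k (f z) = g z}.
  move=> z zX; rewrite /k; case: pickP => [w /andP[wX /eqP fw]|H] /=.
    exact: fg.
  by have := H z; rewrite zX eqxx.
have -> : g @: X = k @: (f @: X).
  by rewrite -imset_comp; apply: eq_in_imset => z zX /=; rewrite kf.
rewrite ltn_neqAle leq_imset_card andbT; apply/negP => /imset_injP H.
have := H (f x) (f y) (imset_f _ xX) (imset_f _ yX).
by rewrite !kf // => /(_ gxy) fe; rewrite fe eqxx in fxy.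
Qed.

Lemma key (T : finType) (e : rel T) (e_sym : symmetric e) (e_irr : irreflexive e)
  (F : {set T}) (HF : min_comp_max_forest e F) (v a b : T)
  (Hv : v \notin F) (HT : [set a; b] \in trees e F) (hab : a != b) (hva : e v a)
  (Hno2 : forall C, C \in trees e F -> C != [set a; b] ->
            ~~ (Hedge e F (inl v) (inr C) && two_edge e v C))
  (C : {set T}) (HC : C \in trees e F) (HCT : C != [set a; b])
  (HE : Hedge e F (inl v) (inr C)) : False.
Proof.
have cs := sym_connect_sym (eF_sym F e_sym).
have aT : a \in [set a; b] by rewrite !inE eqxx.
have bT : b \in [set a; b] by rewrite !inE eqxx orbT.
have aF := trees_sub HT aT; have bF := trees_sub HT bT.
have nbT : forall x y, x \in [set a; b] -> eF e F x y -> y \in [set a; b].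
  move=> x y xT exy; rewrite (trees_mem e_sym HT xT) inE.
  by move: (exy) => /= /and3P[_ -> _]; rewrite connect1.
have nb_b : forall y, eF e F b y -> y = a.
  move=> y eby; have := nbT _ _ bT eby; rewrite !inE => /orP[/eqP//|/eqP yb].
  by move: eby; rewrite yb /eF /= e_irr !andbF.
set F' := v |: (F :\ b).
have inF' : forall x, x \in F -> x != b -> x \in F'.
  by move=> x xF xb; rewrite !inE xF xb orbT.
have aF' : a \in F' by apply: inF'.
have vF' : v \in F' by rewrite !inE eqxx.
have forF' : induced_forest e F'.
  move=> [c [sc uc allc cyc]].
  case: (boolP (v \in c)) => vc; last first.
    apply: HF.1.1; exists c; split => //; apply/allP => x xc.
    move/allP: allc => /(_ x xc); rewrite !inE => /orP[/eqP xv|/andP[]//].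
    by move: vc; rewrite -xv xc.
  have := rot_index vc; set p := (_ ++ _) => rc.
  have sc' : 3 <= size (v :: p) by rewrite -rc size_rot.
  have uc' : uniq (v :: p) by rewrite -rc rot_uniq.
  have allc' : all (fun x => x \in F') (v :: p).
    by apply/allP => x; rewrite -rc mem_rot => /(allP allc).
  have cyc' : cycle e (v :: p) by rewrite -rc rot_cycle.
  case: p sc' uc' allc' cyc' {rc} => [//|x q1] sq1.
  rewrite /= rcons_path => /andP[vnot /andP[xq1 uq]] /andP[_ allq] /and3P[evx pq ezv].
  set z := last x q1 in ezv.
  have zq : z \in q1.
    have gen : forall s, 2 < size (v :: x :: s) -> last x s \in s.
      by case=> [//|q0 q] _; rewrite /= mem_last.
    exact: gen.
  have xz : x != z by apply: contraNneq xq1 => ->.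
  have inFb : forall w, w \in x :: q1 -> (w \in F) && (w != b).
    move=> w wq; have allq2 : all (fun w => w \in F') (x :: q1) := allq.
    move/allP: allq2 => /(_ w wq); rewrite !inE.
    case/orP=> [/eqP wv|/andP[-> ->]//]; by rewrite -wv wq in vnot.
  have /andP[xF xb] := inFb x (mem_head _ _).
  have /andP[zF zb] : (z \in F) && (z != b) by apply: inFb; rewrite inE zq orbT.
  have pF : path (eF e F) x q1.
    apply: (sub_in_path (P := fun w => w \in F)) pq.
      by move=> s t sF tF est; rewrite /eF /= sF tF.
    by apply/allP => w /inFb /andP[].
  have zK : z \in compF e F x by rewrite inE zF; apply/connectP; exists q1.
  have KT : compF e F x \in trees e F by apply: imset_f.
  case: (eqVneq (compF e F x) [set a; b]) => KTe.
    move: zK (mem_comp e xF); rewrite KTe !inE (negbTE xb) (negbTE zb) !orbF.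
    by move=> /eqP zE /eqP xE; rewrite xE zE eqxx in xz.
  move/negP: (Hno2 _ KT KTe); apply; apply/andP; split.
    rewrite /Hedge /= Hv KT /=; apply/existsP; exists x; by rewrite mem_comp // evx.
  rewrite /two_edge; apply: leq_trans (subset_leq_card (_ : [set x; z] \subset _)).
    by rewrite cards2 xz.
  apply/subsetP => w; rewrite !inE => /orP[]/eqP ->.
    by rewrite xF connect0 evx.
  by rewrite zF (e_sym v z) ezv andbT; move: zK; rewrite inE => /andP[].
have cardF' : #|F'| = #|F|.
  by rewrite cardsU1 (cardsD1 b F) bF !inE (negbTE Hv) andbF.
have maxF' : maximum_induced_forest e F'.
  by split => // F'' H; rewrite cardF'; apply: HF.1.2.
have := HF.2 _ maxF'.
pose sig x := if x == b then a else x.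
pose h x := compF e F' (sig x).
have sigF' : forall x, x \in F -> sig x \in F'.
  by move=> x xF; rewrite /sig; case: eqP => [//|/eqP]; apply: inF'.
have treesF' : trees e F' = h @: F.
  apply/setP => K; apply/imsetP/imsetP => [[y yF' ->]|[x xF ->]].
    case: (eqVneq y v) => [->|yv].
      exists a => //; rewrite /h /sig (negbTE hab); apply: comp_eq => //.
      by rewrite in_set vF' connect1 // /eF /= aF' vF' e_sym hva.
    move: yF'; rewrite !inE (negbTE yv) /= => /andP[yb yF].
    by exists y => //; rewrite /h /sig (negbTE yb).
  by exists (sig x) => //; apply: sigF'.
have edge : forall x w, eF e F x w -> connect (eF e F') (sig x) (sig w).
  move=> x w exw; have ewx : eF e F w x by rewrite eF_sym.
  case: (eqVneq x b) => [xb|xb].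
    by rewrite xb in exw; rewrite (nb_b _ exw) /sig xb eqxx (negbTE hab).
  case: (eqVneq w b) => [wb|wb].
    by rewrite wb in ewx; rewrite (nb_b _ ewx) /sig wb eqxx (negbTE hab).
  rewrite /sig (negbTE xb) (negbTE wb); apply: connect1.
  by move: exw => /= /and3P[xF wF ew]; rewrite /eF /= ew !inF'.
have lift : forall x y, connect (eF e F) x y -> connect (eF e F') (sig x) (sig y).
  move=> x y /connectP[p pth ->]; elim: p x pth => [|w p IH] x /=.
    by rewrite connect0.
  by case/andP => exw pw; apply: connect_trans (edge _ _ exw) (IH _ pw).
have fib : {in F &, forall x y, compF e F x = compF e F y -> h x = h y}.
  move=> x y xF yF cxy; have : y \in compF e F x by rewrite cxy mem_comp.
  rewrite inE => /andP[_ /lift cc]; rewrite /h; apply: esym; apply: comp_eq => //.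
  by rewrite in_set sigF'.
move: HE; rewrite /Hedge /= => /and3P[_ _ /existsP[c /andP[cC evc]]].
have cF := trees_sub HC cC.
have cb : c != b.
  by apply: contraNneq HCT => cbe; apply/eqP; rewrite (trees_mem e_sym HC cC) (trees_mem e_sym HT bT) cbe.
have lt := card_lt_fact fib aF cF _ _.
rewrite treesF' /trees -/(compF e F) leqNgt lt //.
  by rewrite -(trees_mem e_sym HT aT) -(trees_mem e_sym HC cC) eq_sym.
rewrite /h /sig (negbTE cb) (negbTE hab); apply: esym; apply: comp_eq => //.
rewrite inE inF' //=; apply: connect_trans (_ : connect _ a v) _.
  by apply: connect1; rewrite /eF /= aF' vF' e_sym.
by apply: connect1; rewrite /eF /= vF' inF'.
Qed.

Theorem lemma28 (T : finType) (e : rel T)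
  (e_sym : symmetric e) (e_irr : irreflexive e)
  (G_conn : forall x y : T, connect e x y)
  (F : {set T}) (HF : min_comp_max_forest e F)
  (b : rel (Hv T)) (r : Hv T) (HB : best_skeleton e F b r)
  (v u1 u2 : T) (x' : Hv T)
  (Hv_S : v \notin F)
  (Hv_B1 : inner_vert e F b (inl v))
  (HT : [set u1; u2] \in trees e F) (Hu12 : u1 != u2) (Hu12e : e u1 u2)
  (Hx' : x' != inr [set u1; u2])
  (Hnb : [set w | inner_edge e F b (inl v) w] = [set inr [set u1; u2]; x'])
  (Hno2 : forall C, C \in trees e F -> C != [set u1; u2] ->
            ~~ (Hedge e F (inl v) (inr C) && two_edge e v C)) :
  forall C, C \in trees e F -> C != [set u1; u2] -> ~~ Hedge e F (inl v) (inr C).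
Proof.
move=> C HC HCT; apply/negP => HE.
have : inr [set u1; u2] \in [set w | inner_edge e F b (inl v) w] by rewrite Hnb !inE eqxx.
rewrite inE /= => /and3P[bvT _ _].
case: HB => [[_ Hb _ _ _] _].
have /and3P[_ _ /existsP[y /andP[yT evy]]] := Hb _ _ bvT.
move: yT; rewrite !inE => /orP[]/eqP yE; subst y.
  exact: (key e_sym e_irr HF Hv_S HT Hu12 evy Hno2 HC HCT HE).
have E : [set u1; u2] = [set u2; u1] := setUC _ _.
rewrite E in HT HCT Hno2.
by apply: (key e_sym e_irr HF Hv_S HT _ evy Hno2 HC HCT HE); rewrite eq_sym.
Qed.
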